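(* Let $K$ be a cubical complex with $H^1(K;\mathbb{Z}/2\mathbb{Z})=0$. Then $K$ has a bicoloring.
   Context: A cubical poset is a poset $P$ in which every order ideal $\{z\in P: z\le x\}$ is isomorphic to a product of copies of $I$, where $I$ is the three-element face poset of an interval with the empty face excluded (two incomparable endpoints below a single maximum). A cubical complex is a (regular) cell complex whose face poset $P$ (excluding the empty face) is a cubical poset such that $P$ with a minimum and a maximum element adjoined is a lattice. A bicoloring of a complex is an assignment of one of two colors to each vertex such that every edge has one endpoint of each color (i.e., the 1-skeleton is bipartite with respect to the coloring). *)

(* Defs.v *)
From HB Require Import structures.
From mathcomp Require Import all_boot all_order.
Set Implicit Arguments. Unset Strict Implicit. Unset Printing Implicit Defensive.
Import Order.Theory.
Local Open Scope order_scope.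

(* The three-element poset I: [Some b] are the two endpoints, [None] the maximum. *)
Definition leI (a b : option bool) : bool := (a == b) || (b == None).

Definition cube (n : nat) := {ffun 'I_n -> option bool}.
Definition lecube (n : nat) (a b : cube n) : bool := [forall i, leI (a i) (b i)].

Section Cubical.
Context {d : Order.disp_t} {P : finPOrderType d}.

(* [cell_dim x n]: the order ideal {z | z <= x} is isomorphic (as a poset) to I^n. *)
Definition cell_dim (x : P) (n : nat) : bool :=
  [exists f : {ffun cube n -> P},
    [&& injectiveb f,
        [forall a : cube n, forall b : cube n, lecube a b == (f a <= f b)]
      & [forall z : P, (z <= x) == (z \in codom f)]]].

Definition cubical_poset : Prop := forall x : P, exists n, cell_dim x n.

Inductive hat := Bot | Elt of P | Top.
Definition leh (a b : hat) : Prop :=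
  match a, b with
  | Bot, _ => True
  | _, Top => True
  | Elt x, Elt y => x <= y
  | _, _ => False
  end.
Definition hat_is_lattice : Prop :=
  forall a b : hat,
    (exists j, [/\ leh a j, leh b j & forall c, leh a c -> leh b c -> leh j c]) /\
    (exists m, [/\ leh m a, leh m b & forall c, leh c a -> leh c b -> leh c m]).

(* Face poset of a (finite, regular) cubical complex. *)
Definition cubical_complex : Prop := cubical_poset /\ hat_is_lattice.

(* Cellular cochains with Z/2 coefficients (Z/2 = bool with xor).  For a regular
   cell complex the incidence number [s : t] is +-1 exactly when t is a facet of s,
   so mod 2 the coboundary of a k-cochain f at a (k+1)-cell s is the sum of f
   over the k-dimensional faces of s. *)
Definition coboundary (k : nat) (f : P -> bool) (s : P) : bool :=
  \big[addb/false]_(t | (t < s) && cell_dim t k) f t.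

Definition H1_Z2_trivial : Prop :=
  forall f : P -> bool,
    (forall s, cell_dim s 2 -> coboundary 1 f s = false) ->
    exists g : P -> bool, forall e, cell_dim e 1 -> f e = coboundary 0 g e.

Definition bicoloring (c : P -> bool) : Prop :=
  forall e u v : P, cell_dim e 1 -> cell_dim u 0 -> cell_dim v 0 ->
    u < e -> v < e -> u != v -> c u != c v.

End Cubical.

(* Main.v *)
Require Import Defs.
From mathcomp Require Import all_boot all_order.
Set Implicit Arguments. Unset Strict Implicit. Unset Printing Implicit Defensive.
Import Order.Theory.
Local Open Scope order_scope.

Lemma card_list (T:finType) (s : seq T) (p : pred T) : uniq s -> (forall x, x \in s) -> #|p| = count p s.
Proof.
move=> us alls; rewrite cardE -size_filter; apply: perm_size.
apply: uniq_perm; first exact: enum_uniq.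
  exact: filter_uniq.
by move=> x; rewrite mem_enum mem_filter alls andbT.
Qed.
Definition L1 : seq (option bool) := [:: None; Some true; Some false].
Definition L2 := [seq (x, y) | x <- L1, y <- L1].
Definition le2 (a b : option bool * option bool) := leI a.1 b.1 && leI a.2 b.2.
Lemma c2 : count [pred a : option bool * option bool | (a != (None,None)) && (count [pred b | le2 b a] L2 == 3^1)%N] L2 = 4.
Proof. by []. Qed.
Lemma c1 : count [pred a : option bool | (a != None) && (count [pred b | leI b a] L1 == 3^0)%N] L1 = 2.
Proof. by []. Qed.
Lemma L1u : uniq L1. Proof. by []. Qed.
Lemma L2u : uniq L2. Proof. by []. Qed.
Lemma L1a x : x \in L1. Proof. by case: x => [[]|]. Qed.
Lemma L2a x : x \in L2. Proof. by case: x => [[[]|] [[]|]]. Qed.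

Definition topc n : cube n := [ffun _ => None].

Lemma card_transfer (T U : finType) (phi : T -> U) (psi : U -> T) :
  cancel phi psi -> cancel psi phi -> forall Q : pred T, #|Q| = #|[pred y | Q (psi y)]|.
Proof.
move=> c1 c2 Q; rewrite -[RHS](card_image (can_inj c2)); apply: eq_card => x.
apply/idP/imageP => [Qx|[y Qy ->]] //.
by exists (phi x); rewrite ?inE /= c1.

Qed.

Definition psi1 (x : option bool) : cube 1 := [ffun _ => x].
Definition phi1 (a : cube 1) := a ord0.
Lemma c11 : cancel phi1 psi1.
Proof. move=> a; apply/ffunP => i; rewrite ffunE /phi1; congr (a _); apply: val_inj; by case: i => [[|//] ?]. Qed.
Lemma c12 : cancel psi1 phi1.
Proof. by move=> x; rewrite /phi1 ffunE. Qed.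
Lemma le1E x y : lecube (psi1 x) (psi1 y) = leI x y.
Proof.
apply/forallP/idP => [/(_ ord0)|H i]; by rewrite !ffunE.
Qed.

Definition psi2 (x : option bool * option bool) : cube 2 :=
  [ffun i : 'I_2 => if val i == 0%N then x.1 else x.2].
Definition phi2 (a : cube 2) := (a ord0, a ord_max).
Lemma c21 : cancel phi2 psi2.
Proof.
move=> a; apply/ffunP => i; rewrite ffunE /phi2.
by case: i => [[|[|m]] Hi] //=; congr (a _); apply: val_inj.
Qed.
Lemma c22 : cancel psi2 phi2.
Proof. by case=> x y; rewrite /phi2 !ffunE. Qed.
Lemma le2E x y : lecube (psi2 x) (psi2 y) = le2 x y.
Proof.
apply/forallP/andP => [H|[H1 H2] [[|[|m]] Hi]].
  by move: (H ord0) (H ord_max); rewrite !ffunE.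
- by rewrite !ffunE.
- by rewrite !ffunE.
- by [].
Qed.

Lemma count1 : #|[pred a : cube 1 | (a != topc 1) && (#|[pred b | lecube b a]| == 3^0)%N]| = 2.
Proof.
rewrite (card_transfer c11 c12) (card_list _ L1u L1a) -c1.
apply: eq_count => y /=.
have -> : topc 1 = psi1 None by apply/ffunP => i; rewrite !ffunE.
rewrite (inj_eq (can_inj c12)) (card_transfer c11 c12) (card_list _ L1u L1a).
rewrite (@eq_count _ _ [pred b | leI b y]) // => z /=; by rewrite le1E.
Qed.

Lemma count2 : #|[pred a : cube 2 | (a != topc 2) && (#|[pred b | lecube b a]| == 3^1)%N]| = 4.
Proof.
rewrite (card_transfer c21 c22) (card_list _ L2u L2a) -c2.
apply: eq_count => y /=.
have -> : topc 2 = psi2 (None, None) by apply/ffunP => i; rewrite !ffunE; case: ifP.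
rewrite (inj_eq (can_inj c22)) (card_transfer c21 c22) (card_list _ L2u L2a).
rewrite (@eq_count _ _ [pred b | le2 b y]) // => z /=; by rewrite le2E.
Qed.

Section Main.
Context {d : Order.disp_t} {P : finPOrderType d}.

Lemma card_cell (x : P) n : cell_dim x n -> #|[pred z | z <= x]| = (3 ^ n)%N.
Proof.
case/existsP => f /and3P [/injectiveP inj _ /forallP H].
have -> : #|[pred z | z <= x]| = #|codom f| by apply: eq_card => z; rewrite inE; exact/eqP/H.
by rewrite (card_codom inj) card_ffun card_option card_bool card_ord.
Qed.

Lemma cell_dimE (cub : @cubical_poset d P) (x : P) k :
  cell_dim x k = (#|[pred z | (z <= x)%O]| == 3 ^ k)%N.
Proof.
apply/idP/eqP => [|E]; first exact: card_cell.
have [n Hn] := cub x; move: (card_cell Hn); rewrite E => /expnI -> //.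
Qed.

Lemma count_faces (cub : @cubical_poset d P) (s : P) n k : cell_dim s n ->
  #|[pred t | (t < s) && cell_dim t k]| =
  #|[pred a : cube n | (a != topc n) && (#|[pred b | lecube b a]| == 3^k)%N]|.
Proof.
case/existsP => f /and3P [/injectiveP inj /forallP Hle /forallP Hcod].
have Hl a b : lecube a b = (f a <= f b) by have /forallP /(_ b) /eqP := Hle a.
have Hc z : (z <= s) = (z \in codom f) by exact/eqP/Hcod.
have fs b : f b <= s by rewrite Hc codom_f.
have es : s = f (topc n).
  have : s \in codom f by rewrite -Hc.
  case/codomP => a0 ea0; rewrite ea0; suff -> : a0 = topc n by []; apply/ffunP => i.
  have := fs (topc n); rewrite ea0 -Hl => /forallP /(_ i).
  by rewrite /leI !ffunE; case: (a0 i).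
have Hid a : #|[pred z | z <= f a]| = #|[pred b | lecube b a]|.
  rewrite -[RHS](card_image inj); apply: eq_card => z /=.
  apply/idP/imageP => [zle|[b /= bl ->]]; last by move: bl; rewrite !inE -Hl.
  have : z \in codom f by rewrite -Hc (le_trans zle (fs a)).
  by case/codomP => b zb; exists b => //=; rewrite inE Hl -zb.
rewrite -[RHS](card_image inj); apply: eq_card => t /=.
apply/andP/imageP => [[ts ct]|[a /andP [na ca] ->]].
  have : t \in codom f by rewrite -Hc ltW.
  case/codomP => a ta; exists a => //=; apply/andP; split.
    by apply: contraTneq ts => ea; rewrite ta ea -es ltxx.
  by rewrite -Hid -ta -cell_dimE.
split; last by rewrite cell_dimE // Hid.
by rewrite lt_def fs andbT es (inj_eq inj) eq_sym.
Qed.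

Lemma sum_true (Q : pred P) : \big[addb/false]_(t | Q t) true = odd #|Q|.
Proof.
transitivity (iter #|Q| (addb true) false); first exact: big_const.
by elim: #|Q| => //= m ->; case: (odd m).
Qed.

End Main.

Theorem proposition2p1 (d : Order.disp_t) (P : finPOrderType d) :
  @cubical_complex d P -> @H1_Z2_trivial d P ->
  exists c : P -> bool, bicoloring c.
Proof.
move=> [cub _] H1.
have [|g Hg] := H1 (fun _ => true).
  move=> s s2; rewrite /coboundary sum_true.
  by rewrite (count_faces cub 1 s2) count2.
exists g => e u v e1 u0 v0 ue ve nuv.
have Hc := count_faces cub 0 e1; rewrite count1 in Hc.
have Hg' := Hg e e1; rewrite /coboundary in Hg'.
have Hset : [set u; v] =i [pred t | (t < e) && cell_dim t 0].
  apply/subset_cardP; first by rewrite cards2 nuv Hc.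
  by apply/subsetP => t; rewrite !inE => /orP [] /eqP ->; apply/andP.
rewrite (eq_bigl (fun t => t \in [set u; v])) in Hg'; last first.
  by move=> t; rewrite Hset.
rewrite big_setU1 ?big_set1 /= in Hg'; last by rewrite inE.
by apply/negP => /eqP E; move: Hg'; rewrite E; case: (g v).
Qed.
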